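(* Let $L_s,L_t\ge 0$ be integers and $M,N$ positive integers with $\gcd(M,N)=1$, and suppose $N<L_t+1$ and $M<L_s+1$. Let $\bm\Omega_s$ be the $(L_t+1)\times(L_s+1)$ matrix with $(l,p)$-th entry $lM+pN$, $0\le l\le L_t$, $0\le p\le L_s$. Then the number of holes of $\bm\Omega_s$, i.e. the number of integers in $[0, L_tM+L_sN]$ that are not equal to any entry of $\bm\Omega_s$, is $(M-1)(N-1)$. *)

(* Defs.v *)
From mathcomp Require Import all_boot all_algebra.
Set Implicit Arguments. Unset Strict Implicit. Unset Printing Implicit Defensive.

Definition Omega_s (Lt Ls M N : nat) : 'M[nat]_(Lt.+1, Ls.+1) :=
  \matrix_(l < Lt.+1, p < Ls.+1) (l * M + p * N)%N.

Definition num_holes (Lt Ls M N : nat) : nat :=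
  #|[set k : 'I_(Lt * M + Ls * N).+1 |
      [forall l : 'I_Lt.+1, forall p : 'I_Ls.+1,
         Omega_s Lt Ls M N l p != (k : nat)]]|.

(* Main.v *)
Require Import Defs.
From mathcomp Require Import all_boot all_algebra zify.
Set Implicit Arguments. Unset Strict Implicit. Unset Printing Implicit Defensive.

Lemma card_ord_pred n (P : nat -> bool) :
  #|[set i : 'I_n | P i]| = \sum_(i < n) P i.
Proof.
rewrite -sum1_card big_mkcond /=; apply: eq_bigr => i _.
by rewrite inE; case: (P i).
Qed.

Lemma card_ge n a : #|[set i : 'I_n | a <= i]| = n - a.
Proof.
rewrite (card_ord_pred n (fun i => a <= i)).
elim: n => [|n IH]; first by rewrite big_ord0.
rewrite big_ord_recr /= IH; case: (leqP a n) => h /=; lia.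
Qed.

Lemma card_le n b : #|[set i : 'I_n | i <= b]| = minn n b.+1.
Proof.
rewrite (card_ord_pred n (fun i => i <= b)).
elim: n => [|n IH]; first by rewrite big_ord0.
rewrite big_ord_recr /= IH; case: (leqP n b) => h /=; lia.
Qed.

Lemma key Ls M N l p l' p' : 0 < M -> coprime M N -> 0 < N -> l' <= l -> p' <= Ls ->
  (l < N) || (Ls < p + M) -> l*M + p*N = l'*M + p'*N -> l = l'.
Proof.
move=> M0 cop N0 ll pL hS E.
apply/eqP; apply/negP => neq.
have lt : l' < l by lia.
have h1 : l' * M <= l * M by rewrite leq_mul2r ll orbT.
have h2 : p * N <= p' * N by lia.
have E2 : (l - l') * M = (p' - p) * N by rewrite !mulnBl; lia.
have dv : N %| (l - l') by rewrite -(@Gauss_dvdl _ _ M) ?E2 ?dvdn_mull // coprime_sym.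
have Nd : N <= l - l' by apply: dvdn_leq => //; lia.
have lN : ~~ (l < N) by rewrite -leqNgt; lia.
rewrite (negbTE lN) /= in hS.
have : M * N <= (p' - p) * N by rewrite -E2 mulnC leq_mul2r Nd orbT.
rewrite leq_pmul2r // => Mp.
lia.
Qed.

Lemma descend Lt Ls M N l p : 0 < N -> l <= Lt -> p <= Ls ->
  exists l' p', [/\ l' <= Lt, p' <= Ls, (l' < N) || (Ls < p' + M) &
                 l'*M + p'*N = l*M + p*N].
Proof.
move=> N0; elim/ltn_ind: l p => l IH p lL pL.
case: (boolP ((l < N) || (Ls < p + M))) => h; first by exists l, p.
move: h; rewrite negb_or -!leqNgt => /andP [h1 h2].
have [|||l' [p' [a b c d]]] := IH (l - N) _ (p + M); try lia.
exists l', p'; split => //; rewrite d mulnDl mulnBl.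
have : N * M <= l * M by rewrite leq_mul2r h1 orbT.
rewrite (mulnC M N); lia.
Qed.

Theorem lemma2 (Ls Lt M N : nat) :
  (0 < M)%N -> (0 < N)%N -> coprime M N ->
  (N < Lt + 1)%N -> (M < Ls + 1)%N ->
  num_holes Lt Ls M N = ((M - 1) * (N - 1))%N.
Proof.
move=> M0 N0 cop NL ML.
rewrite /num_holes.
set T := Lt * M + Ls * N.
set H := [set k : 'I_T.+1 | _].
have bound : forall (l : 'I_Lt.+1) (p : 'I_Ls.+1), l * M + p * N <= T.
  move=> l p; rewrite /T leq_add // leq_mul2r -ltnS ltn_ord orbT //.
pose f := fun x : 'I_Lt.+1 * 'I_Ls.+1 => (inord (x.1 * M + x.2 * N) : 'I_T.+1).
have fval : forall x, (f x : nat) = x.1 * M + x.2 * N.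
  by move=> x; rewrite /f inordK // ltnS bound.
pose S := [set x : 'I_Lt.+1 * 'I_Ls.+1 | (x.1 < N) || (Ls < x.2 + M)].
have inj : {in S &, injective f}.
  move=> [l p] [l' p']; rewrite !inE /= => hS hS' /(congr1 (@nat_of_ord _)).
  rewrite !fval /= => E.
  have ll : (l : nat) = l'.
    case: (leqP l' l) => h.
      apply: (key M0 cop N0 h _ hS E); by rewrite -ltnS ltn_ord.
    apply/esym; apply: (key M0 cop N0 (ltnW h) _ hS' (esym E)); by rewrite -ltnS ltn_ord.
  have pp : (p : nat) = p'.
    move: E; rewrite ll => /addnI /eqP; rewrite eqn_pmul2r // => /eqP //.
  by congr pair; apply: val_inj.
have img : ~: H = f @: S.
  apply/setP => k; apply/idP/idP.
    rewrite !inE => /forallPn [l /forallPn [p /negPn /eqP]].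
    rewrite mxE => E.
    have [l' [p' [a b c d]]] := descend M N0 (ltn_ord l : l <= Lt)
                                 (ltn_ord p : p <= Ls).
    apply/imsetP; exists (Ordinal (a : l' < Lt.+1), Ordinal (b : p' < Ls.+1)).
      by rewrite inE.
    by apply: ord_inj; rewrite fval /= d E.
  move=> /imsetP [x _ ->]; rewrite !inE; apply/negP => /forallP /(_ x.1).
  by move=> /forallP /(_ x.2); rewrite mxE fval eqxx.
have cH := cardsC H; rewrite card_ord img card_in_imset // in cH.
have cS := cardsC S; rewrite card_prod !card_ord in cS.
have CS : ~: S = setX [set l : 'I_Lt.+1 | N <= l] [set p : 'I_Ls.+1 | p <= Ls - M].
  apply/setP => [[l p]]; rewrite !inE /= negb_or -!leqNgt.
  congr andb; apply/idP/idP; lia.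
rewrite CS cardsX card_ge card_le in cS.
have e1 : minn Ls.+1 (Ls - M).+1 = (Ls - M).+1 by lia.
rewrite e1 in cS.
move: cH cS; rewrite /T; move: #|H| #|S| => hh ss.
have [a ->] : exists a, Lt = N + a by exists (Lt - N); lia.
have [b ->] : exists b, Ls = M + b by exists (Ls - M); lia.
have -> : (N + a).+1 - N = a.+1 by lia.
have -> : M + b - M = b by lia.
nia.
Qed.
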